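(* Let $A=(a_{ij})\in\mathbb{Z}^{d\times n}$ with $\Delta:=\max_{i,j}|a_{ij}|\ge 1$, $b\in\mathbb{Z}^d$, $u\in\mathbb{Z}^n_{\ge0}$, $U:=\sum_{j=1}^n u_j$, and $$M:=\Delta U+\max(\|b\|_\infty,\|u\|_\infty)+\Delta+2.$$ Then a vector $(x,s)\in\mathbb{Z}^{n}_{\ge0}\times\mathbb{Z}^{n+1}_{\ge 0}$ (with $x=(x_1,\dots,x_n)$, $s=(s_1,\dots,s_{n+1})$) satisfies the system $$\sum_{j=1}^n a_{ij}x_j=b_i\ (i\in[d]),\qquad x_j+s_j=u_j\ (j\in[n]),\qquad \sum_{j=1}^n(x_j+s_j)+s_{n+1}=U$$ if and only if it satisfies the single equation $$\sum_{i=1}^d M^{i-1}\sum_{j=1}^n a_{ij}x_j+\sum_{j=1}^n M^{d+j-1}(x_j+s_j)+M^{d+n}\Big(\sum_{j=1}^n(x_j+s_j)+s_{n+1}\Big)=\sum_{i=1}^d M^{i-1}b_i+\sum_{j=1}^n M^{d+j-1}u_j+M^{d+n}U.$$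
   Context: $[n]=\{1,\dots,n\}$. The system encodes the ILP constraints $Ax=b$, $0\le x\le u$ with slack variables $s_j$. *)

(* Defs.v *)
(* Integers are `int`; indices are 0-based ordinals. *)
From mathcomp Require Import all_boot all_order all_algebra.
Set Implicit Arguments. Unset Strict Implicit. Unset Printing Implicit Defensive.
Import Order.TTheory GRing.Theory Num.Theory.
Local Open Scope ring_scope.

Definition maxAbsEntry (d n : nat) (A : 'M[int]_(d, n)) : int :=
  \big[Num.max/0]_(i < d) \big[Num.max/0]_(j < n) `|A i j|.

Definition infNorm (m : nat) (v : 'I_m -> int) : int :=
  \big[Num.max/0]_(i < m) `|v i|.

(* Main.v *)
Require Import Defs.
From mathcomp Require Import all_boot all_order all_algebra.
From mathcomp Require Import zify ring lra.
Import Order.TTheory GRing.Theory Num.Theory.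
Local Open Scope ring_scope.

Lemma arith1 {M B S C P T : int} : 0 <= M - 1 -> (M-1)*S <= B*(P-1) ->
  T <= S + P*C -> C <= B -> 0 <= P -> (M-1)*T <= B*(M*P - 1).
Proof.
move=> hM h1 h2 h3 hp.
have := ler_wpM2l hM h2.
have : P * C <= P * B by apply: ler_wpM2l.
nia.
Qed.

Lemma geomB (K : nat) (c : 'I_K -> int) (B M : int) :
  0 <= B -> 1 <= M -> (forall k, `|c k| <= B) ->
  (M - 1) * `|\sum_(k < K) M ^+ k * c k| <= B * (M ^+ K - 1).
Proof.
move=> B0 M1; elim: K c => [|K IH] c hc.
  by rewrite big_ord0 normr0 mulr0 expr0 subrr mulr0.
rewrite big_ord_recr /=.
have h1 := IH (fun k => c (widen_ord (leqnSn K) k)) (fun k => hc _).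
have h2 := ler_normD (\sum_(i < K) M ^+ i * c (widen_ord (leqnSn K) i)) (M ^+ K * c ord_max).
have h3 := hc ord_max.
have hp : 0 <= M ^+ K by apply: exprn_ge0; lia.
rewrite normrM (ger0_norm hp) in h2.
rewrite exprS.
have hM : 0 <= M - 1 by lia.
exact: (arith1 hM h1 h2 h3 hp).
Qed.

Lemma arith2 {M T : int} : 1 <= M -> 1 <= T -> M*T < M -> False.
Proof. nia. Qed.

Lemma digits0 (K : nat) (c : 'I_K -> int) (M : int) :
  1 <= M -> (forall k, `|c k| < M) -> \sum_(k < K) M ^+ k * c k = 0 ->
  forall k, c k = 0.
Proof.
move=> M1; elim: K c => [|K IH] c hc hs k; first by case: k.
move: hs; rewrite big_ord_recl expr0 mul1r.
under eq_bigr => i _ do rewrite lift0 exprS -mulrA.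
rewrite -mulr_sumr.
set S := \sum_(_ < _) _.
move=> hs.
have S0 : S = 0.
  apply/eqP; apply: contraT => hS.
  have h1 : 1 <= `|S| by rewrite -gtz0_ge1 normr_gt0.
  have : c ord0 = - (M * S) by lra.
  move=> e; have := hc ord0; rewrite e normrN normrM (ger0_norm (_ : 0 <= M)); last lia.
  by move=> h; case: (arith2 M1 h1 h).
have c0 : c ord0 = 0 by move: hs; rewrite S0 mulr0 addr0.
have IH' := IH (fun i => c (lift ord0 i)) (fun i => hc _) S0.
case: (unliftP ord0 k) => [j ->|->] //.
Qed.

Lemma bigmax_ge0 (m : nat) (F : 'I_m -> int) : 0 <= \big[Num.max/0]_(i < m) F i.
Proof. by elim/big_rec: _ => // i y _ hy; rewrite le_max hy orbT. Qed.

Lemma single_le (n : nat) (F : 'I_n -> int) (j : 'I_n) :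
  (forall k, 0 <= F k) -> F j <= \sum_(k < n) F k.
Proof.
move=> h; rewrite (bigD1 j) //= lerDl; apply: sumr_ge0 => k _; exact: h.
Qed.

Lemma arith3 {D U T m P Z : int} : 1 <= D -> 0 <= U -> 0 <= T -> 0 <= m -> 1 <= P ->
  (D*U+m+D+1) * (P*Z) <= (D*T+m)*(P-1) -> (Z = T-U \/ Z = U-T) -> 0 <= Z -> T = U.
Proof.
move=> hD hU hT hm hP h hz hZ.
have hB : 0 <= D*T + m by nia.
case: (ltrP 0 Z) => hZ1; last lia.
have key : D*T + m <= (D*U+m+D+1) * Z.
  case: hz => hz.
    have e : T = U + Z by lia.
    rewrite e; nia.
  nia.
have : (D*T + m) * P <= (D*U+m+D+1) * Z * P by apply: ler_wpM2r => //; lia.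
nia.
Qed.

Theorem mainTheorem2 (d n : nat) (A : 'M[int]_(d, n)) (b : 'I_d -> int)
  (u : 'I_n -> int)
  (hDelta : 1 <= maxAbsEntry A)
  (hu : forall j, 0 <= u j)
  (x : 'I_n -> int) (s : 'I_n.+1 -> int)
  (hx : forall j, 0 <= x j) (hs : forall j, 0 <= s j) :
  let Delta := maxAbsEntry A in
  let U := \sum_(j < n) u j in
  let M := Delta * U + Num.max (infNorm b) (infNorm u) + Delta + 2 in
  ((forall i : 'I_d, \sum_(j < n) A i j * x j = b i) /\
   (forall j : 'I_n, x j + s (widen_ord (leqnSn n) j) = u j) /\
   (\sum_(j < n) (x j + s (widen_ord (leqnSn n) j)) + s ord_max = U))
  <->
  (\sum_(i < d) M ^+ i * (\sum_(j < n) A i j * x j)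
   + \sum_(j < n) M ^+ (d + j) * (x j + s (widen_ord (leqnSn n) j))
   + M ^+ (d + n) * (\sum_(j < n) (x j + s (widen_ord (leqnSn n) j)) + s ord_max)
   = \sum_(i < d) M ^+ i * b i
     + \sum_(j < n) M ^+ (d + j) * u j
     + M ^+ (d + n) * U).
Proof.
move=> Delta U M; split.
  move=> [h1 [h2 h3]]; rewrite h3; congr (_ + _ + _).
    by apply: eq_bigr => i _; rewrite h1.
  by apply: eq_bigr => j _; rewrite h2.
move=> H.
set s' := fun j : 'I_n => s (widen_ord (leqnSn n) j).
set e := fun i : 'I_d => \sum_(j < n) A i j * x j - b i.
set f := fun j : 'I_n => x j + s' j - u j.
set T := \sum_(j < n) (x j + s' j) + s ord_max.
set mx := Num.max (infNorm b) (infNorm u).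
set g := fun k : 'I_(d + n) => match split k with inl i => e i | inr j => f j end.
have gl : forall i, g (lshift n i) = e i.
  by move=> i; rewrite /g -[lshift n i]/(unsplit (inl _ i)) unsplitK.
have gr : forall j, g (rshift d j) = f j.
  by move=> j; rewrite /g -[rshift d j]/(unsplit (inr _ j)) unsplitK.
have Heq : \sum_(k < d + n) M ^+ k * g k + M ^+ (d + n) * (T - U) = 0.
  rewrite big_split_ord /=.
  under eq_bigr => i _ do rewrite gl.
  under [X in _ + X + _ = _]eq_bigr => j _ do rewrite gr.
  have E1 : \sum_(i < d) M ^+ i * e i =
     \sum_(i < d) M ^+ i * (\sum_(j < n) A i j * x j) - \sum_(i < d) M ^+ i * b i.
    by rewrite -sumrB; apply: eq_bigr => i _; rewrite mulrBr.
  have E2 : \sum_(j < n) M ^+ (d + j) * f j =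
     \sum_(j < n) M ^+ (d + j) * (x j + s' j) - \sum_(j < n) M ^+ (d + j) * u j.
    by rewrite -sumrB; apply: eq_bigr => j _; rewrite mulrBr.
  rewrite E1 E2 mulrBr; rewrite /T; move: H; rewrite -/s'; lra.
have hA : forall i j, `|A i j| <= Delta.
  move=> i j; apply: le_trans (le_bigmax _ _ i).
  exact: (le_bigmax _ (fun j => `|A i j|) j).
have hbn : forall i, `|b i| <= mx.
  move=> i; apply: le_trans (le_bigmax _ (fun i => `|b i|) i) _; by rewrite /mx le_max; apply/orP; left; exact: lexx.
have hun : forall j, `|u j| <= mx.
  move=> j; apply: le_trans (le_bigmax _ (fun j => `|u j|) j) _; by rewrite /mx le_max; apply/orP; right; exact: lexx.
have mx0 : 0 <= mx by rewrite /mx le_max /infNorm bigmax_ge0.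
have D1 : 1 <= Delta by [].
have U0 : 0 <= U by apply: sumr_ge0 => j _.
have xs0 : forall j, 0 <= x j + s' j by move=> j; exact: addr_ge0 (hx j) (hs _).
have T0 : 0 <= T by apply: addr_ge0 (hs _); apply: sumr_ge0 => j _; exact: xs0.
have xsT : forall j, x j + s' j <= T.
  move=> j; apply: (le_trans (@single_le _ _ j xs0)). by rewrite /T lerDl.
have sxT : \sum_(j < n) x j <= T.
  apply: (@le_trans _ _ (\sum_(j < n) (x j + s' j))).
    by apply: ler_sum => j _; rewrite lerDl; exact: hs.
  by rewrite /T lerDl; exact: hs.
have he : forall i, `|e i| <= Delta * T + mx.
  move=> i; rewrite /e; apply: (le_trans (ler_normB _ _)).
  apply: lerD; last exact: hbn.
  apply: (le_trans (ler_norm_sum _ _ _)).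
  apply: (@le_trans _ _ (\sum_(j < n) Delta * x j)).
    apply: ler_sum => j _; rewrite normrM (ger0_norm (hx j)).
    by apply: ler_wpM2r => //; exact: hA.
  by rewrite -mulr_sumr; apply: ler_wpM2l => //; lia.
have hf : forall j, `|f j| <= Delta * T + mx.
  move=> j; rewrite /f ler_norml.
  have h1 := xsT j; have h2 := xs0 j; have h3 := hun j.
  rewrite (ger0_norm (hu j)) in h3; have h4 := hu j.
  move: h1 h2 h3 h4; generalize (x j + s' j) => X; nia.
have hg : forall k, `|g k| <= Delta * T + mx.
  by move=> k; rewrite /g; case: (split k) => [i|j]; [exact: he | exact: hf].
have M1 : 1 <= M by rewrite /M; nia.
have M1e : M - 1 = Delta * U + mx + Delta + 1 by rewrite /M -/mx; lra.
have hgeo := @geomB _ _ _ _ (addr_ge0 (mulr_ge0 (le_trans ler01 D1) T0) mx0) M1 hg.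
have Hs : \sum_(k < d + n) M ^+ k * g k = - (M ^+ (d + n) * (T - U)) by lra.
rewrite Hs normrN normrM (ger0_norm (exprn_ge0 _ (le_trans ler01 M1))) M1e in hgeo.
have P1 : 1 <= M ^+ (d + n) by rewrite exprn_ege1.
have TU : T = U.
  apply: (arith3 D1 U0 T0 mx0 P1 hgeo) => //.
  case: (lerP 0 (T - U)) => h.
    by left; rewrite ger0_norm.
  by right; rewrite ltr0_norm // opprB.
have hgM : forall k, `|g k| < M.
  move=> k; apply: le_lt_trans (hg k) _; rewrite TU /M -/mx; lra.
have Heq' : \sum_(k < d + n) M ^+ k * g k = 0 by move: Heq; rewrite TU subrr mulr0 addr0.
have g0 := @digits0 _ _ _ M1 hgM Heq'.
split; [|split].
- move=> i; have := g0 (lshift n i); rewrite gl /e; lra.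
- move=> j; have := g0 (rshift d j); rewrite gr /f; move=> h; change (x j + s' j = u j); lra.
- by rewrite -/s' -/T.
Qed.
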